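(* Let $\lambda(z)=\sum_{i\ge 2}\lambda_i z^{i-1}$ be a polynomial with $\lambda_i\ge 0$ and $\sum_i\lambda_i=1$, and let $j=1/\int_0^1\lambda(z)\,dz$. Let $\bar\alpha_j$ be the largest $\alpha\ge 0$ such that $\lambda\!\left(1-e^{-\alpha j x}\right)\le x$ for all $x\in(0,1]$. For an integer $k\ge 2$ and $\alpha>0$ with $\alpha j\le k-1$, set $\delta=\alpha j/(k-1)$ and define the density-evolution sequence $x_0=1$, $x_{i+1}=\delta\,\lambda\!\left(1-(1-x_i)^{k-1}\right)$ for $i\ge 0$. (a) If $\alpha>\bar\alpha_j$, then for every integer $k\ge 2$ with $\alpha j\le k-1$, the sequence $(x_i)$ does not converge to $0$. (b) If $0<\alpha<\bar\alpha_j$, then there exists $K<\infty$ such that for all integers $k\ge K$ the sequence $(x_i)$ converges to $0$.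
   Context: This is the density-evolution (DE) recursion for iterative erasure decoding on the binary erasure channel with erasure probability $\delta$ of a check-regular LDPC ensemble with variable-node edge degree distribution $\lambda$ and all check nodes of degree $k$; convergence of $x_i$ to $0$ corresponds to decoding success with high probability as the block length tends to infinity, and non-convergence to failure. *)

(* Defs.v *)
From Stdlib Require Import Reals.
Open Scope R_scope.

Definition lam_poly (lam : nat -> R) (D : nat) (z : R) : R :=
  sum_f_R0 (fun i => lam i * z ^ (i - 1)) D.

Definition degree_distribution (lam : nat -> R) (D : nat) : Prop :=
  (forall i, (i < 2)%nat -> lam i = 0) /\
  (forall i, (D < i)%nat -> lam i = 0) /\
  (forall i, 0 <= lam i) /\
  sum_f_R0 lam D = 1.

Definition alpha_ok (lam : nat -> R) (D : nat) (j alpha : R) : Prop :=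
  0 <= alpha /\
  forall x, 0 < x <= 1 -> lam_poly lam D (1 - exp (- (alpha * j * x))) <= x.

Fixpoint de_seq (lam : nat -> R) (D : nat) (delta : R) (k : nat) (i : nat) : R :=
  match i with
  | O => 1
  | S i' => delta * lam_poly lam D (1 - (1 - de_seq lam D delta k i') ^ (k - 1))
  end.

(* Main.v *)
Require Import Defs.
From Stdlib Require Import Reals Lra Lia Psatz Classical.
Open Scope R_scope.

Lemma exp_nmul (n : nat) (y : R) : exp (INR n * y) = exp y ^ n.
Proof.
  induction n as [|n IH]; simpl.
  - rewrite Rmult_0_l, exp_0; reflexivity.
  - rewrite <- IH, <- exp_plus. f_equal. destruct n; simpl; lra.
Qed.

Lemma pow_exp_upper (n : nat) (y : R) : 0 <= y <= 1 ->
  (1 - y) ^ n <= exp (- (INR n * y)).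
Proof.
  intros Hy. replace (- (INR n * y)) with (INR n * (- y)) by ring.
  rewrite exp_nmul. apply pow_incr. split; [lra|].
  pose proof (exp_ineq1_le (- y)). lra.
Qed.

Lemma pow_exp_lower (n : nat) (x : R) : 0 <= x < 1 ->
  exp (- (INR n * (x / (1 - x)))) <= (1 - x) ^ n.
Proof.
  intros Hx. set (y := x / (1 - x)).
  replace (- (INR n * y)) with (INR n * (- y)) by ring.
  rewrite exp_nmul. apply pow_incr.
  pose proof (exp_pos (- y)).
  split; [lra|].
  assert (Hy : y * (1 - x) = x) by (unfold y; field; lra).
  pose proof (exp_ineq1_le y) as E.
  assert (EE : exp (- y) * exp y = 1) by (rewrite <- exp_plus; replace (-y+y) with 0 by ring; apply exp_0).
  assert (A : exp y * (1 - x) >= 1) by nra.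
  assert (B : exp (- y) * (exp y * (1 - x) - 1) >= 0).
  { apply Rle_ge, Rmult_le_pos; lra. }
  nra.
Qed.

Lemma sum_zero (f : nat -> R) (N : nat) :
  (forall i, (i <= N)%nat -> f i = 0) -> sum_f_R0 f N = 0.
Proof.
  induction N as [|N IH]; intros H; simpl.
  - apply H; lia.
  - rewrite IH by (intros; apply H; lia). rewrite H by lia. ring.
Qed.

Section L.
Variables (lam : nat -> R) (D : nat).
Hypothesis Hlam : degree_distribution lam D.

Lemma lam0 : lam_poly lam D 0 = 0.
Proof.
  destruct Hlam as [H1 [H2 [H3 H4]]]. unfold lam_poly. apply sum_zero.
  intros i _. destruct (Nat.lt_ge_cases i 2) as [h|h].
  - rewrite H1 by exact h. ring.
  - replace (i - 1)%nat with (S (i - 2)) by lia. simpl. ring.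
Qed.

Lemma lam1 : lam_poly lam D 1 = 1.
Proof.
  destruct Hlam as [H1 [H2 [H3 H4]]]. unfold lam_poly. rewrite <- H4.
  apply sum_eq. intros i _. rewrite H4, pow1. ring.
Qed.

Lemma lam_mono a b : 0 <= a <= b -> lam_poly lam D a <= lam_poly lam D b.
Proof.
  destruct Hlam as [H1 [H2 [H3 H4]]]. intros Hab. unfold lam_poly.
  apply sum_Rle. intros n _. apply Rmult_le_compat_l; [apply H3|].
  apply pow_incr; exact Hab.
Qed.

Lemma lam_nonneg a : 0 <= a -> 0 <= lam_poly lam D a.
Proof. intros; rewrite <- lam0; apply lam_mono; lra. Qed.

Lemma lam_le1 a : 0 <= a <= 1 -> lam_poly lam D a <= 1.
Proof. intros; rewrite <- lam1; apply lam_mono; lra. Qed.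
End L.

Lemma pow_01 (z : R) (n : nat) : 0 <= z <= 1 -> 0 <= z ^ n <= 1.
Proof.
  intros. split. apply pow_le; lra.
  rewrite <- (pow1 n). apply pow_incr; lra.
Qed.

Theorem theorem1 (lam : nat -> R) (D : nat) (j abar : R)
  (Hlam : degree_distribution lam D)
  (pr : Riemann_integrable (lam_poly lam D) 0 1)
  (Hj : j = / RiemannInt pr)
  (Habar : alpha_ok lam D j abar /\ (forall a, alpha_ok lam D j a -> a <= abar)) :
  (forall alpha : R, abar < alpha ->
     forall k : nat, (2 <= k)%nat -> alpha * j <= INR (k - 1) ->
       ~ Un_cv (de_seq lam D (alpha * j / INR (k - 1)) k) 0) /\
  (forall alpha : R, 0 < alpha < abar ->
     exists K : nat, forall k : nat, (K <= k)%nat -> (2 <= k)%nat ->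
       alpha * j <= INR (k - 1) ->
       Un_cv (de_seq lam D (alpha * j / INR (k - 1)) k) 0).
Proof.
  destruct Habar as [Hok Hmax].
  assert (Hab0 : 0 <= abar) by apply Hok.
  assert (Hint : 0 <= RiemannInt pr).
  { pose proof (RiemannInt_P19 (RiemannInt_P14 0 1 0) pr) as P.
    rewrite RiemannInt_P15 in P. assert (0 * (1 - 0) <= RiemannInt pr); [|lra].
    apply P; [lra|]. intros x Hx. apply lam_nonneg; [exact Hlam|lra]. }
  assert (Hj0 : 0 <= j).
  { rewrite Hj. destruct (Req_dec (RiemannInt pr) 0) as [e|e].
    - rewrite e, Rinv_0; lra.
    - left; apply Rinv_0_lt_compat; lra. }
  assert (Hjp : 0 < j).
  { destruct Hj0 as [h|h]; [exact h|exfalso].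
    assert (abar + 1 <= abar); [|lra].
    apply Hmax. split; [lra|]. intros x Hx. rewrite <- h.
    replace (- ((abar + 1) * 0 * x)) with 0 by ring. rewrite exp_0.
    replace (1 - 1) with 0 by ring. rewrite (lam0 _ _ Hlam). lra. }
  split.
  - intros alpha Hal k Hk Hkj Hcv.
    set (n := (k - 1)%nat) in *.
    assert (Hn : 1 <= INR n).
    { replace 1 with (INR 1) by reflexivity. apply le_INR. unfold n; lia. }
    set (delta := alpha * j / INR n) in *.
    assert (Hdn : delta * INR n = alpha * j) by (unfold delta; field; lra).
    assert (Hd0 : 0 < delta).
    { unfold delta. apply Rdiv_lt_0_compat; [apply Rmult_lt_0_compat|]; lra. }
    assert (Hd1 : delta <= 1).
    { unfold delta. apply (Rmult_le_reg_r (INR n)); [lra|].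
      unfold Rdiv. rewrite Rmult_assoc, Rinv_l by lra. lra. }
    assert (Hnot : ~ alpha_ok lam D j alpha).
    { intros h. apply Hmax in h. lra. }
    assert (Hex : exists xs, 0 < xs <= 1 /\
              xs < lam_poly lam D (1 - exp (- (alpha * j * xs)))).
    { apply NNPP. intros Hne. apply Hnot. split; [lra|].
      intros x Hx. apply Rnot_lt_le. intros hl. apply Hne. exists x. split; assumption. }
    destruct Hex as [xs [Hxs Hlt]].
    set (y := delta * xs).
    assert (Hy0 : 0 < y) by (unfold y; apply Rmult_lt_0_compat; lra).
    assert (Hy1 : y <= 1) by (unfold y; nra).
    assert (Hfy : y <= delta * lam_poly lam D (1 - (1 - y) ^ n)).
    { unfold y at 1. apply Rmult_le_compat_l; [lra|]. left.
      eapply Rlt_le_trans; [exact Hlt|]. apply lam_mono; [exact Hlam|].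
      pose proof (pow_exp_upper n y (conj (Rlt_le _ _ Hy0) Hy1)) as P.
      replace (INR n * y) with (alpha * j * xs) in P by (unfold y; nra).
      pose proof (exp_pos (- (alpha * j * xs))).
      assert (exp (- (alpha * j * xs)) <= 1).
      { rewrite <- exp_0. assert (0 < alpha * j * xs) by (apply Rmult_lt_0_compat; [apply Rmult_lt_0_compat|]; lra). left; apply exp_increasing. lra. }
      lra. }
    assert (Hinv : forall i, y <= de_seq lam D delta k i <= 1).
    { induction i as [|i IH]; simpl; [lra|].
      fold n. pose proof (pow_01 (1 - de_seq lam D delta k i) n ltac:(lra)).
      split.
      - eapply Rle_trans; [exact Hfy|]. apply Rmult_le_compat_l; [lra|].
        apply lam_mono; [exact Hlam|].
        pose proof (pow_01 (1 - y) n ltac:(lra)).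
        assert ((1 - de_seq lam D delta k i) ^ n <= (1 - y) ^ n); [|lra].
        apply pow_incr; lra.
      - assert (lam_poly lam D (1 - (1 - de_seq lam D delta k i) ^ n) <= 1)
          by (apply lam_le1; [exact Hlam|lra]).
        assert (0 <= lam_poly lam D (1 - (1 - de_seq lam D delta k i) ^ n))
          by (apply lam_nonneg; [exact Hlam|lra]).
        nra. }
    destruct (Hcv y Hy0) as [N HN]. specialize (HN N (le_n N)).
    specialize (Hinv N). unfold R_dist in HN. rewrite Rminus_0_r in HN.
    rewrite Rabs_right in HN by lra. lra.
  - intros alpha [Ha0 Hab].
    set (a' := (alpha + abar) / 2).
    set (eps := (a' - alpha) / a').
    assert (Ha' : alpha < a' < abar) by (unfold a'; lra).
    assert (Heps : 0 < eps < 1).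
    { unfold eps; split; [apply Rdiv_lt_0_compat; lra|].
      apply (Rmult_lt_reg_r a'); [lra|]. unfold Rdiv. rewrite Rmult_assoc, Rinv_l by lra. lra. }
    destruct (INR_unbounded (alpha * j / eps)) as [K HK].
    exists (S K). intros k HKk Hk Hkj.
    set (n := (k - 1)%nat) in *.
    assert (HKn : INR K <= INR n) by (apply le_INR; unfold n; lia).
    assert (Hn : 1 <= INR n).
    { replace 1 with (INR 1) by reflexivity. apply le_INR. unfold n; lia. }
    set (delta := alpha * j / INR n) in *.
    assert (Hdn : delta * INR n = alpha * j) by (unfold delta; field; lra).
    assert (Hd0 : 0 < delta).
    { unfold delta. apply Rdiv_lt_0_compat; [apply Rmult_lt_0_compat|]; lra. }
    assert (Hde : delta <= eps).
    { assert (alpha * j < eps * INR n).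
      { apply (Rmult_lt_reg_r (/ eps)). apply Rinv_0_lt_compat; lra.
        replace (eps * INR n * / eps) with (INR n) by (field; lra). unfold Rdiv in HK. lra. }
      nra. }
    set (s := a' / abar).
    assert (Hs : 0 < s < 1).
    { unfold s; split; [apply Rdiv_lt_0_compat; lra|].
      apply (Rmult_lt_reg_r abar); [lra|]. unfold Rdiv. rewrite Rmult_assoc, Rinv_l by lra. lra. }
    assert (Hkey : alpha <= a' * (1 - delta)).
    { assert (eps * a' = a' - alpha) by (unfold eps; field; lra). nra. }
    assert (Hstep : forall x, 0 <= x <= delta ->
               delta * lam_poly lam D (1 - (1 - x) ^ n) <= s * x).
    { intros x Hx. destruct (Req_dec x 0) as [e|e].
      - subst x. replace (1 - 0) with 1 by ring. rewrite pow1.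
        replace (1 - 1) with 0 by ring. rewrite (lam0 _ _ Hlam). lra.
      - set (t := s * (x / delta)).
        assert (Ht : 0 < t <= 1).
        { unfold t. split. apply Rmult_lt_0_compat; [lra|apply Rdiv_lt_0_compat; lra].
          assert (x / delta <= 1).
          { apply (Rmult_le_reg_r delta); [lra|]. unfold Rdiv. rewrite Rmult_assoc, Rinv_l by lra. lra. }
          assert (0 <= x / delta) by (unfold Rdiv; apply Rmult_le_pos; [lra| left; apply Rinv_0_lt_compat; lra]). nra. }
        assert (Hx1 : 0 <= x < 1) by lra.
        assert (HnE : INR n = alpha * j / delta) by (rewrite <- Hdn; field; lra).
        set (C := j * x / delta).
        assert (HC : 0 < C) by (unfold C; apply Rdiv_lt_0_compat; [apply Rmult_lt_0_compat|]; lra).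
        assert (E1 : INR n * (x / (1 - x)) = alpha * C / (1 - x))
          by (rewrite HnE; unfold C; field; lra).
        assert (E2 : abar * j * t = a' * C) by (unfold t, s, C; field; lra).
        assert (Hcmp : alpha * C / (1 - x) <= a' * C).
        { unfold Rdiv; apply (Rmult_le_reg_r (1 - x)); [lra|].
          rewrite Rmult_assoc, Rinv_l by lra.
          assert (alpha <= a' * (1 - x)) by nra. nra. }
        pose proof (pow_exp_lower n x Hx1) as P.
        assert (Pe : exp (- (abar * j * t)) <= exp (- (INR n * (x / (1 - x))))).
        { rewrite E1, E2. destruct (Rle_lt_or_eq_dec _ _ Hcmp) as [h|h].
          - left; apply exp_increasing; lra.
          - rewrite h; lra. }
        pose proof (pow_01 (1 - x) n ltac:(lra)).
        assert (Hl : lam_poly lam D (1 - (1 - x) ^ n) <= t).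
        { eapply Rle_trans; [|apply (proj2 Hok t Ht)].
          apply lam_mono; [exact Hlam|lra]. }
        assert (delta * t = s * x) by (unfold t; field; lra).
        nra. }
    assert (Hinv : forall i, 0 <= de_seq lam D delta k (S i) <= delta * s ^ i).
    { induction i as [|i IH].
      - simpl de_seq. fold n. pose proof (pow_01 (1 - 1) n ltac:(lra)).
        assert (lam_poly lam D (1 - (1 - 1) ^ n) <= 1)
          by (apply lam_le1; [exact Hlam|lra]).
        assert (0 <= lam_poly lam D (1 - (1 - 1) ^ n))
          by (apply lam_nonneg; [exact Hlam|lra]).
        simpl pow. split; nra.
      - change (de_seq lam D delta k (S (S i))) with
          (delta * lam_poly lam D (1 - (1 - de_seq lam D delta k (S i)) ^ (k - 1))).
        fold n.
        pose proof (pow_01 s i ltac:(lra)).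
        assert (Hle : de_seq lam D delta k (S i) <= delta) by nra.
        pose proof (pow_01 (1 - de_seq lam D delta k (S i)) n ltac:(nra)).
        assert (0 <= lam_poly lam D (1 - (1 - de_seq lam D delta k (S i)) ^ n))
          by (apply lam_nonneg; [exact Hlam|lra]).
        split; [nra|].
        eapply Rle_trans; [apply Hstep; lra|]. simpl pow. nra. }
    intros e He.
    assert (Hed : 0 < e / delta) by (apply Rdiv_lt_0_compat; lra).
    destruct (pow_lt_1_zero s ltac:(rewrite Rabs_right; lra) (e / delta) Hed) as [N HN].
    exists (S N). intros m Hm. destruct m as [|m]; [lia|].
    unfold R_dist. rewrite Rminus_0_r. specialize (Hinv m).
    specialize (HN m ltac:(lia)). rewrite Rabs_right in HN by (apply Rle_ge, pow_le; lra).
    rewrite Rabs_right by lra.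
    assert (delta * s ^ m < delta * (e / delta)) by (apply Rmult_lt_compat_l; lra).
    replace (delta * (e / delta)) with e in * by (field; lra). lra.
Qed.
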